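(* Consider, on the reference element $E=[-1,1]^3$ of a moving curved hexahedral element, the split form ALE discontinuous Galerkin spectral element semi-discretization of the three-dimensional compressible Euler equations described in the context, with time-differentiable nodal values $\mathcal{J}_{ijk}(\tau)$ and $\mathbf{U}_{ijk}(\tau)$. Suppose the volume flux functions $\mathbf{G}^{\#}_\iota$ and the surface flux functions $\mathbf{G}^{*}_\iota$, $\iota=1,2,3$, satisfy Jameson's conditions $$\mathbf{G}^{\upsilon+1,\#}_\iota=\mathbf{G}^{1,\#}_\iota\{\{u_\upsilon\}\}+\{\{p\}\}\,\delta_{\iota\upsilon},\qquad \mathbf{G}^{\upsilon+1,*}_\iota=\mathbf{G}^{1,*}_\iota\{\{u_\upsilon\}\}+\{\{p\}\}^{\star}\,\delta_{\iota\upsilon},\qquad \upsilon=1,2,3,$$ where $\{\{p\}\}^{\star}$ can be any consistent numerical trace approximation of the pressure (in the volume condition the averages are taken of the two nodal states entering $\mathbf{G}^{\#}_\iota$, in the surface condition of the interior and exterior states), and the Cartesian surface mass fluxes $\mathbf{G}^{1,*}_\iota$ are consistent with $\rho(u_\iota-\nu_\iota)$, $\iota=1,2,3$. Then for every element the scheme satisfies $$\frac{\partial}{\partial\tau}\big\langle I^N(\Bbbk),\mathcal{J}\big\rangle_N=-\frac12\sum_{\iota=1}^3\Big\langle \Big(\frac{\partial I^N(p)}{\partial\xi^\iota}\Big)\mathbb{J}\vec a^{\,\iota}+p\Big(\frac{\partial I^N(\mathbb{J}\vec a^{\,\iota})}{\partial\xi^\iota}\Big)+\Big(\frac{\partial I^N(p\,\mathbb{J}\vec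 a^{\,\iota})}{\partial\xi^\iota}\Big),\vec u\Big\rangle_N-\sum_{\iota=1}^3\int_{\partial E,N}\hat s\,n_\iota\Big[\tfrac12\overline{|\vec u|}^{2}\,\mathbf{G}^{1,*}_\iota+\big(\{\{p\}\}^{\star}-p^-\big)u_\iota^-\Big]\,dS,$$ where $\Bbbk=\frac12\rho|\vec u|^2$ is the kinetic energy, $\overline{|\vec u|}^{2}:=\sum_{\iota=1}^3\big(2\{\{u_\iota\}\}^2-\{\{u_\iota^2\}\}\big)$, and $u_\iota^-$, $p^-$ are the interior (own-element) values at the surface nodes.
   Context: Euler setting: state $\mathbf{u}=[\rho,\rho\vec u,\rho e+\tfrac12\rho|\vec u|^2]^T\in\mathbb{R}^5$ with density $\rho$, velocity $\vec u=(u_1,u_2,u_3)$, pressure $p$, $e=p/((\gamma-1)\rho)$, $\gamma>1$. Advective fluxes $\mathbf{f}_\iota$ ($\iota=1,2,3$) have components $\mathbf{f}^1_\iota=\rho u_\iota$, $\mathbf{f}^{\upsilon+1}_\iota=\rho u_\iota u_\upsilon+p\delta_{\iota\upsilon}$ ($\upsilon=1,2,3$), $\mathbf{f}^5_\iota=\rho u_\iota(e+\frac12|\vec u|^2)+pu_\iota$; superscripts $1,\dots,5$ denote components. $\vec\nu=(\nu_1,\nu_2,\nu_3)$ is the prescribed grid velocity. Discretization: $\{\xi_i\}_{i=0}^N$ are the Legendre–Gauss–Lobatto (LGL) nodes on $[-1,1]$ ($\xi_0=-1,\xi_N=1$) with weights $\omega_i$, $\ell_j$ the Lagrange polynomials on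 them, $\mathcal{D}_{ij}=\ell_j'(\xi_i)$; $\omega_{ijk}=\omega_i\omega_j\omega_k$. All quantities are represented by nodal values at the tensor LGL nodes $(\xi_i,\xi_j,\xi_k)$; $I^N(g)=\sum_{ijk}g_{ijk}\ell_i(\xi^1)\ell_j(\xi^2)\ell_k(\xi^3)$ is tensor-product interpolation, and derivatives $\partial/\partial\xi^\iota$ are exact derivatives of interpolants. Discrete inner product: $\langle \mathbf f,\mathbf g\rangle_N=\sum_{i,j,k=0}^N\omega_{ijk}\mathbf f_{ijk}^T\mathbf g_{ijk}$ (also for scalar or 3-vector valued functions). Discrete surface integral: for $h$ defined at surface nodes (possibly depending on the outward reference normal $\hat n=(\hat n^1,\hat n^2,\hat n^3)$ of the face), $\int_{\partial E,N}h\,dS$ is the sum over the six faces of $E$ of the tensor LGL quadrature (weights $\omega$ in the two tangential directions) of $h$ at the face nodes; for fluxes, $\int_{\partial E,N}\boldsymbol\varphi^T\mathbf F_1\hat n^1dS=\sum_{j,k}\omega_j\omega_k(\boldsymbol\varphi_{Njk}^T(\mathbf F_1)_{Njk}-\boldsymbol\varphi_{0jk}^T(\mathbf F_1)_{0jk})$ and analogously in directions 2, 3. $\mathcal{J}_{ijk}(\tau)$ are nodal values of the discrete Jacobian; $\mathbb{J}\vec a^{\,\iota}$ ($\iota=1,2,3$) are discrete volume-weighted contravariant vectors with Cartesian components $\mathbb{J}a^\iota_\beta$; on faces, $\hat s=|\sum_\iota \mathbb{J}\vec a^{\,\iota}\hat n^\iota|$ and $\vec n=\hat s^{-1}\sum_\iota\mathbb{J}\vec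 a^{\,\iota}\hat n^\iota$. The nodal state $\mathbf{U}_{ijk}$ determines nodal $\rho,\vec u,p,e$; $\mathbf{F}_\iota(\mathbf U)$ is $\mathbf f_\iota$ evaluated at nodes and $\mathbf{G}_\iota=\mathbf F_\iota(\mathbf U)-\nu_\iota\mathbf U$. Averages/jumps: for nodal pairs, $\{\{a\}\}_{(i,m)jk}=\frac12(a_{ijk}+a_{mjk})$ (analogously in $j$, $k$); at surface nodes, with ''$-$'' the own-element value and ''$+$'' the neighbor's value, $\{\{a\}\}=\frac12(a^++a^-)$, $[\![a]\!]=a^+-a^-$. Volume fluxes $\mathbf{G}^{\#}_\iota(\vec\nu_L,\vec\nu_R,\mathbf U_L,\mathbf U_R)\in\mathbb R^5$ are symmetric in exchanging $(\vec\nu_L,\mathbf U_L)\leftrightarrow(\vec\nu_R,\mathbf U_R)$ and consistent: $\mathbf G^{\#}_\iota(\vec\nu_L,\vec\nu_R,\mathbf U,\mathbf U)=\mathbf F_\iota(\mathbf U)-\{\{\nu_\iota\}\}\mathbf U$. Volume operator at node $ijk$: $\mathbb{D}\cdot\tilde{\mathbf G}^{\#}_{ijk}=\sum_{m=0}^N\sum_{\beta=1}^3\big[2\mathcal D_{im}\mathbf G^{\#}_\beta(\vec\nu_{ijk},\vec\nu_{mjk},\mathbf U_{ijk},\mathbf U_{mjk})\{\{\mathbb Ja^1_\beta\}\}_{(i,m)jk}+2\mathcal D_{jm}\mathbf G^{\#}_\beta(\vec\nu_{ijk},\vec\nu_{imk},\mathbf U_{ijk},\mathbf U_{imk})\{\{\mathbb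 Ja^2_\beta\}\}_{i(j,m)k}+2\mathcal D_{km}\mathbf G^{\#}_\beta(\vec\nu_{ijk},\vec\nu_{ijm},\mathbf U_{ijk},\mathbf U_{ijm})\{\{\mathbb Ja^3_\beta\}\}_{ij(k,m)}\big]$. Surface fluxes $\mathbf G^*_\iota$ are functions of interior/exterior states; $\tilde{\mathbf G}^*_{\hat n}=\hat s\sum_\iota n_\iota\mathbf G^*_\iota$ and $\tilde{\mathbf G}_{\hat n}=\sum_\iota\hat n^\iota\sum_\beta\mathbb Ja^\iota_\beta\mathbf G_\beta$. Scheme (per element): for all $\boldsymbol\varphi$ in the tensor-product polynomials of degree $N$ with values in $\mathbb R^5$, $\big\langle \frac{\partial(\mathcal J\mathbf U)}{\partial\tau},\boldsymbol\varphi\big\rangle_N=-\langle\mathbb D\cdot\tilde{\mathbf G}^{\#},\boldsymbol\varphi\rangle_N-\int_{\partial E,N}\boldsymbol\varphi^T(\tilde{\mathbf G}^*_{\hat n}-\tilde{\mathbf G}_{\hat n})\,dS,$ coupled with an evolution equation for $\mathcal J$ (discrete geometric conservation law) $\langle\partial_\tau\mathcal J,\varphi\rangle_N=\langle\mathbb D\cdot\tilde{\vec\nu}^{\#},\varphi\rangle_N+\int_{\partial E,N}\varphi(\tilde\nu^*_{\hat n}-\tilde\nu_{\hat n})dS$, whose precise form is not used in the claim. Here $\langle I^N(\Bbbk),\mathcal J\rangle_N=\sum_{ijk}\omega_{ijk}\Bbbk_{ijk}\mathcal J_{ijk}$. *)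

(* Defs.v *)
From HB Require Import structures.
From mathcomp Require Import all_boot all_order all_algebra.
From mathcomp Require Import all_classical all_reals all_analysis.
Set Implicit Arguments. Unset Strict Implicit. Unset Printing Implicit Defensive.
Import Order.TTheory GRing.Theory Num.Theory.
Local Open Scope ring_scope.

Section Defs.
Variable R : realType.

(* conserved state u = [rho, rho u_1, rho u_2, rho u_3, rho e + 1/2 rho |u|^2];
   component c (paper's superscript c+1) *)
Definition state := 'I_5 -> R.
Definition vec3 := 'I_3 -> R.
Definition node (N : nat) := {ffun 'I_3 -> 'I_N.+1}.

(* component index of momentum rho u_b (paper: b+1, b=1,2,3) and of energy *)
Definition cmom (b : 'I_3) : 'I_5 := inord b.+1.
Definition cen : 'I_5 := inord 4.

Definition rho (U : state) : R := U ord0.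
Definition vel (U : state) (b : 'I_3) : R := U (cmom b) / rho U.
Definition speed2 (U : state) : R := \sum_b vel U b ^+ 2.
Definition kin (U : state) : R := 1/2 * rho U * speed2 U.
(* rho e = p/(gamma-1) and U^5 = rho e + 1/2 rho |u|^2 *)
Definition pres (gamma : R) (U : state) : R :=
  (gamma - 1) * (U cen - 1/2 * rho U * speed2 U).
Definition eint (gamma : R) (U : state) : R := pres gamma U / ((gamma - 1) * rho U).
Definition delta (a b : 'I_3) : R := (a == b)%:R.
Definition avg (a b : R) : R := (a + b) / 2.

Definition fluxF (gamma : R) (iota : 'I_3) (U : state) : state := fun c =>
  if c == ord0 then rho U * vel U iota
  else if c == cen then
    rho U * vel U iota * (eint gamma U + 1/2 * speed2 U) + pres gamma U * vel U iota
  else rho U * vel U iota * vel U (@inord 2 c.-1)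
       + pres gamma U * delta iota (@inord 2 c.-1).

(* Legendre-Gauss-Lobatto nodes/weights: N >= 1, increasing nodes with
   xi_0 = -1, xi_N = 1, and the quadrature is exact for all polynomials of
   degree <= 2N-1 (this characterizes the Gauss-Lobatto rule uniquely). *)
Definition is_LGL (N : nat) (xi w : 'I_N.+1 -> R) : Prop :=
  [/\ (0 < N)%N, xi ord0 = -1, xi ord_max = 1,
      (forall i j : 'I_N.+1, (i < j)%N -> xi i < xi j) &
      forall m : nat, (m <= 2 * N - 1)%N ->
        \sum_i w i * xi i ^+ m = (1 - (-1) ^+ m.+1) / (m.+1)%:R].

Definition lagr (N : nat) (xi : 'I_N.+1 -> R) (j : 'I_N.+1) : {poly R} :=
  \prod_(m < N.+1 | m != j) (('X - (xi m)%:P) * ((xi j - xi m)^-1)%:P).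
Definition Dmat (N : nat) (xi : 'I_N.+1 -> R) (i j : 'I_N.+1) : R :=
  (deriv (lagr xi j)).[xi i].

Definition wvol (N : nat) (w : 'I_N.+1 -> R) (x : node N) : R := \prod_b w (x b).
Definition wface (N : nat) (w : 'I_N.+1 -> R) (x : node N) (d : 'I_3) : R :=
  \prod_(b | b != d) w (x b).
Definition upd (N : nat) (x : node N) (d : 'I_3) (m : 'I_N.+1) : node N :=
  [ffun b => if b == d then m else x b].
(* nodal values of d/dxi^d of the interpolant I^N(g) *)
Definition dxi (N : nat) (xi : 'I_N.+1 -> R) (g : node N -> R) (d : 'I_3) (x : node N) : R :=
  \sum_m Dmat xi (x d) m * g (upd x d m).

Definition ip (N : nat) (w : 'I_N.+1 -> R) (f g : node N -> state) : R :=
  \sum_x wvol w x * \sum_c f x c * g x c.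
Definition ip3 (N : nat) (w : 'I_N.+1 -> R) (f g : node N -> vec3) : R :=
  \sum_x wvol w x * \sum_b f x b * g x b.

(* faces: direction d and side s (true: xi^d = +1, false: xi^d = -1) *)
Definition face_node (N : nat) (x : node N) (d : 'I_3) (s : bool) : bool :=
  x d == (if s then ord_max else ord0).
Definition sgn (s : bool) : R := if s then 1 else -1.
Definition nhat (d : 'I_3) (s : bool) (k : 'I_3) : R := if k == d then sgn s else 0.
Definition surf_int (N : nat) (w : 'I_N.+1 -> R) (h : node N -> 'I_3 -> bool -> R) : R :=
  \sum_d \sum_(s : bool) \sum_(x | face_node x d s) wface w x d * h x d s.

(* sum_iota JJa^iota hat n^iota, hat s, n at a surface node;
   Ja x iota beta = JJa^iota_beta at node x *)
Definition cvec (N : nat) (Ja : node N -> 'I_3 -> 'I_3 -> R) (x : node N) (d : 'I_3) (s : bool)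
  (beta : 'I_3) : R := \sum_k nhat d s k * Ja x k beta.
Definition shat (N : nat) (Ja : node N -> 'I_3 -> 'I_3 -> R) x d s : R :=
  Num.sqrt (\sum_beta cvec Ja x d s beta ^+ 2).
Definition nvec (N : nat) (Ja : node N -> 'I_3 -> 'I_3 -> R) x d s (beta : 'I_3) : R :=
  (shat Ja x d s)^-1 * cvec Ja x d s beta.

Definition volD (N : nat) (xi : 'I_N.+1 -> R)
  (Gsharp : 'I_3 -> vec3 -> vec3 -> state -> state -> state)
  (nu : node N -> vec3) (Ja : node N -> 'I_3 -> 'I_3 -> R) (U : node N -> state)
  (x : node N) : state := fun c =>
  \sum_m \sum_beta \sum_d
     2 * Dmat xi (x d) m * Gsharp beta (nu x) (nu (upd x d m)) (U x) (U (upd x d m)) c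
       * avg (Ja x d beta) (Ja (upd x d m) d beta).

Definition Gtn (N : nat) (gamma : R) (nu : node N -> vec3) (Ja : node N -> 'I_3 -> 'I_3 -> R)
  (U : node N -> state) (x : node N) (d : 'I_3) (s : bool) : state := fun c =>
  \sum_k nhat d s k * \sum_beta Ja x k beta * (fluxF gamma beta (U x) c - nu x beta * U x c).

Definition Gstarn (N : nat) (Gstar : 'I_3 -> vec3 -> state -> state -> state)
  (nu : node N -> vec3) (Ja : node N -> 'I_3 -> 'I_3 -> R)
  (U : node N -> state) (Uext : node N -> 'I_3 -> bool -> state)
  (x : node N) (d : 'I_3) (s : bool) : state := fun c =>
  shat Ja x d s * \sum_beta nvec Ja x d s beta * Gstar beta (nu x) (U x) (Uext x d s) c.

Definition ubar2 (Um Up : state) : R :=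
  \sum_k (2 * avg (vel Up k) (vel Um k) ^+ 2 - avg (vel Up k ^+ 2) (vel Um k ^+ 2)).

End Defs.
Arguments delta {R}.
Arguments sgn {R}.
Arguments nhat {R}.

(* Main.v *)
Require Import Defs.
From HB Require Import structures.
From mathcomp Require Import all_boot all_order all_algebra.
From mathcomp Require Import all_classical all_reals all_analysis.
From mathcomp Require Import zify ring lra.
Import Order.TTheory GRing.Theory Num.Theory.
Local Open Scope ring_scope.

Section LGL.
Variables (R : realType) (N : nat) (xi w : 'I_N.+1 -> R).
Hypothesis H : is_LGL xi w.

Lemma xi_inj : injective xi.
Proof.
case: H => _ _ _ mono _ i j eij; apply/val_inj => /=.
case: (ltngtP i j) => // ij.
- by have := mono _ _ ij; rewrite eij ltxx.
- by have := mono _ _ ij; rewrite eij ltxx.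
Qed.

Lemma lagr_node j k : (lagr xi j).[xi k] = (k == j)%:R.
Proof.
rewrite /lagr horner_prod; case: eqP => [->|kj].
  apply: big1 => m mj; rewrite hornerM hornerXsubC hornerC mulfV // subr_eq0.
  by apply/eqP => /xi_inj e; move: mj; rewrite e eqxx.
rewrite (bigD1 k) /=; last by apply/eqP.
by rewrite hornerM hornerXsubC subrr !mul0r.
Qed.

Lemma size_lagr j : (size (lagr xi j) <= N.+1)%N.
Proof.
rewrite /lagr size_prod; last first.
  move=> m mj; rewrite mulf_eq0 negb_or polyXsubC_eq0 /= polyC_eq0 invr_eq0 subr_eq0.
  by apply/eqP => /xi_inj e; move: mj; rewrite e eqxx.
rewrite (eq_bigr (fun _ => 2%N)); last first.
  move=> m mj; rewrite mulrC mul_polyC size_scale ?size_XsubC //.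
  rewrite invr_eq0 subr_eq0.
  by apply/eqP => /xi_inj e; move: mj; rewrite e eqxx.
rewrite sum_nat_const.
have -> : #|[pred m : 'I_N.+1 | m != j]| = N.
  by rewrite cardC1 card_ord.
lia.
Qed.


Lemma sum_lagr : \sum_j lagr xi j = 1.
Proof.
apply/eqP; rewrite -subr_eq0; apply/negPn/negP => nz.
have := max_poly_roots nz (rs := map xi (enum 'I_N.+1)).
rewrite size_map size_enum_ord.
have -> : all (root (\sum_j lagr xi j - 1)) [seq xi i | i <- enum 'I_N.+1].
  apply/allP => _ /mapP [k _ ->]; rewrite /root hornerD hornerN hornerC horner_sum.
  rewrite (eq_bigr (fun j => (k == j)%:R)); last by move=> j _; rewrite lagr_node eq_sym.
  by rewrite (bigD1 k) //= eqxx big1 ?addr0 ?subrr // => j /negbTE; rewrite eq_sym => ->.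
rewrite map_inj_uniq ?enum_uniq; last exact: xi_inj.
move=> /(_ isT isT); apply/negP; rewrite -leqNgt.
apply: leq_trans (size_polyD _ _) _; rewrite geq_max size_polyN size_polyC. apply/andP; split; last by case: ((1:R) != 0).
idtac.
  apply: (leq_trans (size_sum _ _ _)).
by apply/bigmax_leqP => j _; apply: size_lagr.
Qed.

Lemma Dsum i : \sum_m Dmat xi i m = 0.
Proof.
rewrite /Dmat -horner_sum -raddf_sum sum_lagr.
have -> : (poly_deriv__canonical__Algebra_Additive R 1) = 0 by rewrite /= -polyC1 derivC.
by rewrite horner0.
Qed.


Lemma quad_deriv (P : {poly R}) : (size P <= (N + N).+1)%N ->
  \sum_k w k * (P^`()).[xi k] = P.[1] - P.[-1].
Proof.
move=> sP.
have sP' : (size P^`() <= N + N)%N.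
  have [->|nz] := eqVneq P 0; first by rewrite deriv0 size_poly0.
  by rewrite -ltnS (leq_trans (lt_size_deriv nz)).
case: H => N0 _ _ _ ex.
rewrite (eq_bigr (fun k => \sum_(j < N + N) P^`()`_j * (w k * xi k ^+ j))); last first.
  by move=> k _; rewrite (horner_coef_wide _ sP') mulr_sumr; apply: eq_bigr => j _; ring.
rewrite exchange_big /=.
rewrite (eq_bigr (fun j : 'I_(N+N) => P`_j.+1 * (1 - (-1) ^+ j.+1))); last first.
  move=> j _; rewrite -mulr_sumr ex; last by have := ltn_ord j; lia.
  by rewrite coef_deriv -mulr_natr; field; rewrite (_ : 1 + j%:R = j.+1%:R) ?pnatr_eq0 // -addn1 natrD addrC.

rewrite (horner_coef_wide 1 sP) (horner_coef_wide (-1) sP) -sumrB big_ord_recl /=.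
rewrite expr0 subrr add0r; apply: eq_bigr => j _.
by rewrite /bump /= add1n expr1n mulr1 mulrBr mulr1.
Qed.

Lemma sbp i m : w i * Dmat xi i m + w m * Dmat xi m i =
  ((i == ord_max) && (m == ord_max))%:R - ((i == ord0) && (m == ord0))%:R.
Proof.
have sP : (size (lagr xi i * lagr xi m)%R <= (N + N).+1)%N.
  apply: (leq_trans (size_polyMleq _ _)).
  have := size_lagr i; have := size_lagr m; lia.
case: (H) => _ xi0 xiN _ _.
have E : \sum_k w k * ((lagr xi i * lagr xi m)^`()).[xi k] =
   (lagr xi i * lagr xi m).[xi ord_max] - (lagr xi i * lagr xi m).[xi ord0].
  by rewrite xi0 xiN quad_deriv.
rewrite !hornerM !lagr_node in E.
transitivity (\sum_k w k * ((lagr xi i * lagr xi m)^`()).[xi k]); last first.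
  by rewrite E -!natrM !mulnb !(eq_sym ord_max) !(eq_sym ord0).
rewrite derivM.
rewrite (eq_bigr (fun k => w k * ((lagr xi i)^`().[xi k] * (k == m)%:R)
   + w k * ((k == i)%:R * (lagr xi m)^`().[xi k]))); last first.
  by move=> k _; rewrite hornerD !hornerM !lagr_node mulrDr.
rewrite big_split /= addrC /Dmat; congr (_ + _).
  rewrite (bigD1 i) //= eqxx mul1r big1 ?addr0 // => k /negbTE ->; by rewrite mul0r mulr0.
rewrite (bigD1 m) //= eqxx mulr1 big1 ?addr0 // => k /negbTE ->; by rewrite mulr0 mulr0.
Qed.

Lemma sbp' i m : w i * Dmat xi i m + w m * Dmat xi m i =
  ((i == m) && (i == ord_max))%:R - ((i == m) && (i == ord0))%:R.
Proof.
rewrite sbp; case: (eqVneq i m) => [->|im] /=; first by rewrite andbb andbb.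
have h1 : forall k, (i == k) && (m == k) = false.
  by move=> k; apply/negP => /andP [/eqP e1 /eqP e2]; move: im; rewrite e1 e2 eqxx.
by rewrite !h1.
Qed.

End LGL.
Section Nodes.
Variables (R : realType) (N : nat) (w : 'I_N.+1 -> R).

Lemma upd_at (x : node N) d m : upd x d m d = m.
Proof. by rewrite /upd ffunE eqxx. Qed.

Lemma upd_id (x : node N) d : upd x d (x d) = x.
Proof. by apply/ffunP => b; rewrite /upd ffunE; case: eqP => // ->. Qed.

Lemma upd_upd (x : node N) d m m' : upd (upd x d m) d m' = upd x d m'.
Proof. by apply/ffunP => b; rewrite /upd !ffunE; case: eqP. Qed.

Lemma wvol_split (x : node N) d : wvol w x = w (x d) * wface w x d.
Proof. by rewrite /wvol /wface (bigD1 d). Qed.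

Lemma wface_upd (x : node N) d m : wface w (upd x d m) d = wface w x d.
Proof. by apply: eq_bigr => b bd; rewrite /upd ffunE (negbTE bd). Qed.

End Nodes.

Section SBPsum.
Variables (R : realType) (N : nat) (xi w : 'I_N.+1 -> R).
Hypothesis H : is_LGL xi w.

Lemma sbp_sum d (F : node N -> node N -> R)
  (Fsym : forall x m, F (upd x d m) x = F x (upd x d m)) :
  \sum_x wvol w x * \sum_m Dmat xi (x d) m * F x (upd x d m) =
  1/2 * \sum_(s : bool) \sum_(x | face_node x d s) wface w x d * (sgn s * F x x).
Proof.
set L := LHS.
have E1 : L = \sum_p (wface w p.1 d * (w (p.1 d) * Dmat xi (p.1 d) p.2)
                       * F p.1 (upd p.1 d p.2)).
  rewrite /L -(pair_big xpredT xpredT (fun x m =>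
       wface w x d * (w (x d) * Dmat xi (x d) m) * F x (upd x d m))) /=.
  apply: eq_bigr => x _; rewrite mulr_sumr; apply: eq_bigr => m _.
  by rewrite (@wvol_split _ _ w _ d); ring.
set f := fun p : node N * 'I_N.+1 => (upd p.1 d p.2, p.1 d).
have finv : involutive f.
  by case=> x m; rewrite /f /= upd_upd upd_id upd_at.
have E2 : L = \sum_p (wface w p.1 d * (w p.2 * Dmat xi p.2 (p.1 d))
                       * F p.1 (upd p.1 d p.2)).
  rewrite E1 (reindex_inj (inv_inj finv)) /=; apply: eq_bigr => -[x m] _ /=.
  by rewrite wface_upd upd_at upd_upd upd_id Fsym.
have E3 : L + L = \sum_x wface w x d * ((x d == ord_max)%:R - (x d == ord0)%:R) * F x x.
  rewrite {1}E1 E2 -big_split /=.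
  rewrite -(pair_big xpredT xpredT (fun x m =>
     wface w x d * (w (x d) * Dmat xi (x d) m) * F x (upd x d m)
     + wface w x d * (w m * Dmat xi m (x d)) * F x (upd x d m))) /=.
  apply: eq_bigr => x _.
  rewrite (eq_bigr (fun m => wface w x d * (((x d == m) && (x d == ord_max))%:R
       - ((x d == m) && (x d == ord0))%:R) * F x (upd x d m))); last first.
    by move=> m _; rewrite -(@sbp' _ _ _ _ H); ring.
  rewrite (bigD1 (x d)) //= eqxx /= upd_id big1 ?addr0 // => m /negbTE.
  by rewrite eq_sym => ->; rewrite /= subrr mulr0 mul0r.
have -> : L = 1/2 * (L + L) by field.
rewrite E3 big_bool /= /face_node /sgn; congr (_ * _).
rewrite (big_mkcond (fun x : node N => x d == ord_max)) (big_mkcond (fun x : node N => x d == ord0)) -big_split /=; apply: eq_bigr => x _.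
have n0 : (ord0 : 'I_N.+1) != ord_max.
  apply/eqP => /(congr1 val) /=; case: H => /lt0n_neq0 /eqP; lia.
case: (eqVneq (x d) ord_max) => [e1|h1].
  by rewrite e1 eq_sym (negbTE n0) /=; ring.
case: (eqVneq (x d) ord0) => [e2|h2] /=; ring.
Qed.

End SBPsum.
Set Implicit Arguments. Unset Strict Implicit.
Lemma val_cmom (b : 'I_3) : nat_of_ord (cmom b) = b.+1.
Proof. by rewrite /cmom inordK //; have := ltn_ord b; lia. Qed.

Lemma val_cen : nat_of_ord cen = 4%N.
Proof. by rewrite /cen inordK. Qed.

Lemma cmom_neq0 b : (cmom b == ord0) = false.
Proof. by apply/negbTE; rewrite -val_eqE /= val_cmom. Qed.

Lemma cmom_neqcen b : (cmom b == cen) = false.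
Proof. apply/negbTE; rewrite -val_eqE /= val_cmom val_cen; have := ltn_ord b; lia. Qed.

Lemma inord_cmom b : (@inord 2 (cmom b).-1) = b.
Proof. by apply/val_inj; rewrite val_cmom /= inordK. Qed.

Lemma cen_neq0 : (cen == ord0) = false.
Proof. by apply/negbTE; rewrite -val_eqE /= val_cen. Qed.

Lemma sum5 (R : nmodType) (f : 'I_5 -> R) :
  \sum_c f c = f ord0 + \sum_b f (cmom b) + f cen.
Proof.
rewrite big_ord_recl big_ord_recr /= addrA; congr (_ + _ + f _).
  by apply: eq_bigr => b _; congr f; apply/val_inj; rewrite /= val_cmom.
by apply/val_inj; rewrite /= val_cen.
Qed.

Lemma sum3 (R : nmodType) (f : 'I_3 -> R) :
  \sum_b f b = f (inord 0) + f (inord 1) + f (inord 2).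
Proof.
rewrite !big_ord_recr big_ord0 /= add0r; congr (f _ + f _ + f _);
  by apply/val_inj; rewrite /= inordK.
Qed.

Lemma sum_delta (R : realType) (f : 'I_3 -> R) (a : 'I_3) :
  \sum_b f b * delta a b = f a.
Proof.
rewrite (bigD1 a) //= /delta eqxx mulr1 big1 ?addr0 // => b /negbTE.
by rewrite eq_sym => ->; rewrite mulr0.
Qed.

Section Pointwise.
Variables (R : realType) (gamma : R).

Definition phiK (V : state R) (c : 'I_5) : R :=
  if c == ord0 then - (1/2 * speed2 V) else if c == cen then 0 else vel V (inord c.-1).

Lemma phi_sum (g : state R) V :
  \sum_c g c * phiK V c = - (1/2 * speed2 V) * g ord0 + \sum_b g (cmom b) * vel V b.
Proof.
rewrite sum5 /phiK eqxx cen_neq0 eqxx mulr0 addr0 mulrC; congr (_ + _).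
by apply: eq_bigr => b _; rewrite cmom_neq0 cmom_neqcen inord_cmom.
Qed.

Lemma jam_vol (G : state R) (V V' : state R) (P : R) (beta : 'I_3) :
  (forall b, G (cmom b) = G ord0 * avg (vel V b) (vel V' b) + P * delta beta b) ->
  \sum_c G c * phiK V c =
    G ord0 * (\sum_b vel V b * vel V' b) / 2 + P * vel V beta.
Proof.
move=> hJ; rewrite phi_sum.
rewrite (eq_bigr (fun b => G ord0 * avg (vel V b) (vel V' b) * vel V b
                          + (vel V b * P) * delta beta b)); last first.
  by move=> b _; rewrite hJ; ring.
rewrite big_split /= sum_delta /speed2 /avg !sum3; ring.
Qed.

Lemma mom_vel (V : state R) b : rho V != 0 -> V (cmom b) = rho V * vel V b.
Proof. by move=> nz; rewrite /vel mulrC divfK. Qed.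

Lemma flux_phi (V : state R) (beta : 'I_3) (n : R) : 0 < rho V ->
  \sum_c (fluxF gamma beta V c - n * V c) * phiK V c =
    1/2 * speed2 V * (rho V * vel V beta - n * rho V) + pres gamma V * vel V beta.
Proof.
move=> pos; have nz : rho V != 0 by rewrite gt_eqF.
rewrite phi_sum /fluxF eqxx.
rewrite (eq_bigr (fun b => (rho V * vel V beta * vel V b - n * (rho V * vel V b)) * vel V b
                          + (vel V b * pres gamma V) * delta beta b)); last first.
  by move=> b _; rewrite cmom_neq0 cmom_neqcen inord_cmom mom_vel //; ring.
by rewrite big_split /= sum_delta /speed2 !sum3 /rho; move: (V ord0) (vel V beta) (vel V (inord 0)) (vel V (inord 1)) (vel V (inord 2)) (pres gamma V) => a b c d e f; field.
Qed.

Lemma star_phi (G : state R) (Um Up : state R) (ps : R) (beta : 'I_3) :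
  (forall b, G (cmom b) = G ord0 * avg (vel Up b) (vel Um b) + ps * delta beta b) ->
  \sum_c G c * phiK Um c = 1/2 * ubar2 Um Up * G ord0 + ps * vel Um beta.
Proof.
move=> hJ; rewrite phi_sum.
rewrite (eq_bigr (fun b => G ord0 * avg (vel Up b) (vel Um b) * vel Um b
                          + (vel Um b * ps) * delta beta b)); last first.
  by move=> b _; rewrite hJ; ring.
by rewrite big_split /= sum_delta /speed2 /ubar2 /avg !sum3; field.
Qed.

End Pointwise.

Section Surf.
Variables (R : realType) (N : nat) (w : 'I_N.+1 -> R).

Lemma cvec_eq (Ja : node N -> 'I_3 -> 'I_3 -> R) x d s beta :
  cvec Ja x d s beta = sgn s * Ja x d beta.
Proof.
rewrite /cvec (bigD1 d) //= /nhat eqxx big1 ?addr0 // => k /negbTE kd.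
by rewrite kd mul0r.
Qed.

Lemma shat_nvec (Ja : node N -> 'I_3 -> 'I_3 -> R) x d s beta :
  shat Ja x d s * nvec Ja x d s beta = cvec Ja x d s beta.
Proof.
rewrite /nvec mulrA; case: (eqVneq (shat Ja x d s) 0) => [h|h]; last first.
  by rewrite mulfV ?mul1r.
rewrite h mul0r mul0r; move: h; rewrite /shat => /eqP; rewrite sqrtr_eq0 => h.
have h0 : \sum_b cvec Ja x d s b ^+ 2 = 0.
  by apply/eqP; rewrite eq_le h /=; apply: sumr_ge0 => b _; apply: sqr_ge0.
have := @psumr_eq0P _ _ xpredT (fun b => cvec Ja x d s b ^+ 2) (fun b _ => sqr_ge0 _) h0 beta isT.
by move/eqP; rewrite sqrf_eq0 => /eqP ->.
Qed.

Lemma surf_intD h1 h2 : surf_int w h1 + surf_int w h2 =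
  surf_int w (fun x d s => h1 x d s + h2 x d s).
Proof.
rewrite /surf_int -big_split; apply: eq_bigr => d _.
rewrite -big_split; apply: eq_bigr => s _.
rewrite -big_split; apply: eq_bigr => x _; by rewrite /= mulrDr.
Qed.

Lemma surf_intN h : - surf_int w h = surf_int w (fun x d s => - h x d s).
Proof.
rewrite /surf_int -sumrN; apply: eq_bigr => d _.
rewrite -sumrN; apply: eq_bigr => s _.
rewrite -sumrN; apply: eq_bigr => x _; ring.
Qed.

Lemma surf_int_sum (I : finType) (h : I -> node N -> 'I_3 -> bool -> R) :
  \sum_i surf_int w (h i) = surf_int w (fun x d s => \sum_i h i x d s).
Proof.
rewrite /surf_int exchange_big; apply: eq_bigr => d _.
rewrite exchange_big; apply: eq_bigr => s _.
rewrite exchange_big; apply: eq_bigr => x _; by rewrite mulr_sumr.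
Qed.

Lemma surf_int_ext h1 h2 :
  (forall x d s, face_node x d s -> h1 x d s = h2 x d s) ->
  surf_int w h1 = surf_int w h2.
Proof.
move=> e; apply: eq_bigr => d _; apply: eq_bigr => s _; apply: eq_bigr => x f.
by rewrite e.
Qed.

End Surf.
Section Der.
Variable R : realType.
Implicit Types (f g : R -> R) (t df dg : R).

Lemma isD_add f g t df dg : is_derive t 1 f df -> is_derive t 1 g dg ->
  is_derive t 1 (fun s => f s + g s) (df + dg).
Proof. by move=> h1 h2; exact: is_deriveD. Qed.

Lemma isD_mul f g t df dg : is_derive t 1 f df -> is_derive t 1 g dg ->
  is_derive t 1 (fun s => f s * g s) (f t * dg + g t * df).
Proof. by move=> h1 h2; exact: is_deriveM. Qed.

Lemma isD_cst t (c : R) : is_derive t 1 (fun _ => c) 0.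
Proof. exact: is_derive_cst. Qed.

Lemma isD_inv f t df : f t != 0 -> is_derive t 1 f df ->
  is_derive t 1 (fun s => (f s)^-1) (- (f t) ^-2 * df).
Proof.
move=> nz h; have d := @ex_derive _ _ _ _ _ _ _ h.
apply: DeriveDef; first exact: derivableV.
by rewrite deriveV // derive_val.
Qed.

Lemma isD_sum (I : finType) (F : I -> R -> R) (dF : I -> R) t :
  (forall i, is_derive t 1 (F i) (dF i)) ->
  is_derive t 1 (fun s => \sum_i F i s) (\sum_i dF i).
Proof.
move=> h; rewrite /index_enum; elim: (Finite.enum I) => [|i r IH].
  under eq_fun do rewrite big_nil. by rewrite big_nil; exact: isD_cst.
under eq_fun do rewrite big_cons. by rewrite big_cons; apply: isD_add.
Qed.

Lemma isD_derive1 f t df : is_derive t 1 f df -> derive1 f t = df.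
Proof. by move=> h; rewrite derive1E derive_val. Qed.

Lemma isD_of f t : derivable f t 1 -> is_derive t 1 f (derive1 f t).
Proof. by move=> h; rewrite derive1E; exact: derivableP. Qed.

End Der.

Section DerNode.
Variable R : realType.

Lemma deriv_node (J : R -> R) (V : R -> state R) t :
  (forall s, 0 < rho (V s)) -> derivable J t 1 ->
  (forall c, derivable (fun s => V s c) t 1) ->
  is_derive t 1 (fun s => kin (V s) * J s)
    (\sum_c derive1 (fun s => J s * V s c) t * phiK (V t) c).
Proof.
move=> pos dJ dV.
have hJ := isD_of dJ; have hV := fun c => isD_of (dV c).
set J' := derive1 J t in hJ *; set V' := fun c => derive1 (fun s => V s c) t.
have nz : V t ord0 != 0 by have := pos t; rewrite /rho => /gt_eqF ->.
have E c : derive1 (fun s => J s * V s c) t = J t * V' c + V t c * J'.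
  exact: isD_derive1 (isD_mul hJ (hV c)).
have hvel b : is_derive t 1 (fun s => V s (cmom b) * (V s ord0)^-1)
   (V t (cmom b) * (- (V t ord0) ^-2 * V' ord0) + (V t ord0)^-1 * V' (cmom b)).
  exact: isD_mul (hV (cmom b)) (isD_inv nz (hV ord0)).
have hsq b : is_derive t 1 (fun s => (V s (cmom b) * (V s ord0)^-1) * (V s (cmom b) * (V s ord0)^-1))
  _ := isD_mul (hvel b) (hvel b).
have hsp := isD_sum hsq.
have hk := isD_mul (isD_mul (isD_cst t (1/2 : R)) (hV ord0)) hsp.
have hkJ := isD_mul hk hJ.
apply: is_derive_eq.
transitivity (\sum_c (J t * V' c + V t c * J') * phiK (V t) c); last first.
  by apply: eq_bigr => c _; congr (_ * _); symmetry; exact: E.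
have e0 : (V^~ ord0)^`()%classic t = V' ord0 by [].
rewrite e0 phi_sum /speed2 /vel /rho !sum3 /=.
field.
exact: nz.
Qed.

End DerNode.
Lemma sum3_mul (R : realType) (I J K L : finType) (T : I -> J -> K -> L -> R) (phi : L -> R) :
  \sum_l (\sum_i \sum_j \sum_k T i j k l) * phi l =
  \sum_i \sum_j \sum_k \sum_l T i j k l * phi l.
Proof.
under eq_bigr do rewrite mulr_suml. rewrite exchange_big; apply: eq_bigr => i _.
under eq_bigr do rewrite mulr_suml. rewrite exchange_big; apply: eq_bigr => j _.
under eq_bigr do rewrite mulr_suml. by rewrite exchange_big.
Qed.

Section Static.
Variables (R : realType) (N : nat) (gamma : R) (xi w : 'I_N.+1 -> R)
  (Gsharp : 'I_3 -> vec3 R -> vec3 R -> state R -> state R -> state R)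
  (Gstar : 'I_3 -> vec3 R -> state R -> state R -> state R)
  (pstar : state R -> state R -> R)
  (U : node N -> state R) (Ja : node N -> 'I_3 -> 'I_3 -> R) (nu : node N -> vec3 R)
  (Uext : node N -> 'I_3 -> bool -> state R).
Hypothesis H : is_LGL xi w.
Hypothesis Gsym : forall iota nL nR UL UR, 0 < rho UL -> 0 < rho UR ->
     Gsharp iota nL nR UL UR = Gsharp iota nR nL UR UL.
Hypothesis Gcons : forall iota nL nR V, 0 < rho V ->
     Gsharp iota nL nR V V = fun c => fluxF gamma iota V c - avg (nL iota) (nR iota) * V c.
Hypothesis Gjam : forall iota ups nL nR UL UR, 0 < rho UL -> 0 < rho UR ->
     Gsharp iota nL nR UL UR (cmom ups) =
       Gsharp iota nL nR UL UR ord0 * avg (vel UL ups) (vel UR ups)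
       + avg (pres gamma UL) (pres gamma UR) * delta iota ups.
Hypothesis Sjam : forall iota ups n Um Up, 0 < rho Um -> 0 < rho Up ->
     Gstar iota n Um Up (cmom ups) =
       Gstar iota n Um Up ord0 * avg (vel Up ups) (vel Um ups)
       + pstar Um Up * delta iota ups.
Hypothesis pos : forall x, 0 < rho (U x).
Hypothesis posext : forall x d s, face_node x d s -> 0 < rho (Uext x d s).

Let F1 d beta x y := 2 * avg (Ja x d beta) (Ja y d beta) *
   (Gsharp beta (nu x) (nu y) (U x) (U y) ord0 * (\sum_b vel (U x) b * vel (U y) b) / 2).
Let F2 d beta x y := 2 * avg (Ja x d beta) (Ja y d beta) * (avg (pres gamma (U x)) (pres gamma (U y)) * vel (U x) beta).

Lemma stepA x : \sum_c volD xi Gsharp nu Ja U x c * phiK (U x) c =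
  \sum_d \sum_beta \sum_m Dmat xi (x d) m *
     (F1 d beta x (upd x d m) + F2 d beta x (upd x d m)).
Proof.
rewrite /volD sum3_mul.
have E : forall m beta d, \sum_c 2 * Dmat xi (x d) m *
     Gsharp beta (nu x) (nu (upd x d m)) (U x) (U (upd x d m)) c *
     avg (Ja x d beta) (Ja (upd x d m) d beta) * phiK (U x) c =
   Dmat xi (x d) m * (F1 d beta x (upd x d m) + F2 d beta x (upd x d m)).
  move=> m beta d.
  rewrite (eq_bigr (fun c => Gsharp beta (nu x) (nu (upd x d m)) (U x) (U (upd x d m)) c
      * phiK (U x) c * (2 * Dmat xi (x d) m * avg (Ja x d beta) (Ja (upd x d m) d beta))));
    last by move=> c _; ring.
  rewrite -mulr_suml (jam_vol (V' := U (upd x d m)) (P := avg (pres gamma (U x)) (pres gamma (U (upd x d m)))) (beta := beta)); last first.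
    by move=> b; rewrite Gjam.
  rewrite /F1 /F2; ring.
under eq_bigr do under eq_bigr do under eq_bigr do rewrite E.
rewrite exchange_big /=; under eq_bigr do rewrite exchange_big /=.
by rewrite exchange_big.
Qed.


Lemma stepB : ip w (volD xi Gsharp nu Ja U) (fun x => phiK (U x)) =
  \sum_d \sum_beta \sum_x wvol w x * \sum_m Dmat xi (x d) m * F1 d beta x (upd x d m)
  + \sum_d \sum_beta \sum_x wvol w x * \sum_m Dmat xi (x d) m * F2 d beta x (upd x d m).
Proof.
rewrite /ip; under eq_bigr do rewrite stepA.
rewrite -big_split /=; under [RHS]eq_bigr do rewrite -big_split /=.
under [RHS]eq_bigr do under eq_bigr do rewrite -big_split /=.
under eq_bigr do rewrite mulr_sumr.
rewrite exchange_big /=; apply: eq_bigr => d _.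
under eq_bigr do rewrite mulr_sumr.
rewrite exchange_big /=; apply: eq_bigr => beta _.
apply: eq_bigr => x _; rewrite -mulrDr -big_split /=; congr (_ * _).
by apply: eq_bigr => m _; rewrite mulrDr.
Qed.

Lemma F1sym d beta x m : F1 d beta (upd x d m) x = F1 d beta x (upd x d m).
Proof.
rewrite /F1 Gsym // /avg [Ja (upd x d m) d beta + _]addrC; congr (_ * (_ * _ / _)).
by apply: eq_bigr => b _; rewrite mulrC.
Qed.

Lemma stepC : \sum_d \sum_beta \sum_x wvol w x * \sum_m Dmat xi (x d) m * F1 d beta x (upd x d m)
  = surf_int w (fun x d s => \sum_beta 1/2 * (sgn s * F1 d beta x x)).
Proof.
under eq_bigr => d _ do under eq_bigr => beta _ do rewrite (@sbp_sum _ _ _ _ H d (F1 d beta) (@F1sym d beta)).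
rewrite exchange_big /= -surf_int_sum; apply: eq_bigr => beta _.
rewrite /surf_int; apply: eq_bigr => d _.
rewrite mulr_sumr; apply: eq_bigr => s _.
rewrite mulr_sumr; apply: eq_bigr => x _; ring.
Qed.

Lemma stepD1 (x : node N) d beta : \sum_m Dmat xi (x d) m * F2 d beta x (upd x d m) =
  1/2 * ((dxi xi (fun y => pres gamma (U y)) d x * Ja x d beta
         + pres gamma (U x) * dxi xi (fun y => Ja y d beta) d x
         + dxi xi (fun y => pres gamma (U y) * Ja y d beta) d x) * vel (U x) beta).
Proof.
rewrite /dxi.
set a := Ja x d beta; set q := pres gamma (U x); set u := vel (U x) beta.
have -> : \sum_m Dmat xi (x d) m * F2 d beta x (upd x d m) = 1/2 * u * \sum_m (a * q * Dmat xi (x d) m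
   + a * (Dmat xi (x d) m * pres gamma (U (upd x d m)))
   + q * (Dmat xi (x d) m * Ja (upd x d m) d beta)
   + Dmat xi (x d) m * (pres gamma (U (upd x d m)) * Ja (upd x d m) d beta)).
  by rewrite mulr_sumr; apply: eq_bigr => m _; rewrite /F2 /avg /a /q /u; field.
rewrite !big_split /= -!mulr_sumr (@Dsum _ _ _ _ H); ring.
Qed.

Lemma stepD : \sum_d \sum_beta \sum_x wvol w x * \sum_m Dmat xi (x d) m * F2 d beta x (upd x d m)
  = 1/2 * \sum_iota ip3 w
          (fun x beta =>
             dxi xi (fun y => pres gamma (U y)) iota x * Ja x iota beta
             + pres gamma (U x) * dxi xi (fun y => Ja y iota beta) iota x
             + dxi xi (fun y => pres gamma (U y) * Ja y iota beta) iota x)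
          (fun x beta => vel (U x) beta).
Proof.
rewrite mulr_sumr; apply: eq_bigr => d _.
rewrite /ip3 exchange_big mulr_sumr /=; apply: eq_bigr => x _.
rewrite mulr_sumr mulr_sumr; apply: eq_bigr => beta _.
rewrite stepD1; ring.
Qed.


Lemma nhat_sum d s (Y : 'I_3 -> R) : \sum_k nhat d s k * Y k = sgn s * Y d.
Proof.
rewrite (bigD1 d) //= /nhat eqxx big1 ?addr0 // => k /negbTE kd.
by rewrite kd mul0r.
Qed.

Lemma stepE (x : node N) d s : face_node x d s ->
  \sum_beta 1/2 * (sgn s * F1 d beta x x)
  + \sum_c phiK (U x) c * (Gstarn Gstar nu Ja U Uext x d s c - Gtn gamma nu Ja U x d s c)
  = \sum_iota shat Ja x d s * nvec Ja x d s iota *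
            (1/2 * ubar2 (U x) (Uext x d s)
                 * Gstar iota (nu x) (U x) (Uext x d s) ord0
             + (pstar (U x) (Uext x d s) - pres gamma (U x)) * vel (U x) iota).
Proof.
move=> f; have pe := posext f; have px := pos x.
have E1 : \sum_c phiK (U x) c * (Gstarn Gstar nu Ja U Uext x d s c - Gtn gamma nu Ja U x d s c)
   = \sum_c Gstarn Gstar nu Ja U Uext x d s c * phiK (U x) c
     - \sum_c Gtn gamma nu Ja U x d s c * phiK (U x) c.
  by rewrite -sumrB; apply: eq_bigr => c _; ring.
have E2 : \sum_c Gstarn Gstar nu Ja U Uext x d s c * phiK (U x) c =
   \sum_beta (sgn s * Ja x d beta) * (1/2 * ubar2 (U x) (Uext x d s)
       * Gstar beta (nu x) (U x) (Uext x d s) ord0 + pstar (U x) (Uext x d s) * vel (U x) beta).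
  rewrite /Gstarn.
  under eq_bigr do rewrite mulr_sumr mulr_suml.
  rewrite exchange_big /=; apply: eq_bigr => beta _.
  rewrite -(star_phi (G := Gstar beta (nu x) (U x) (Uext x d s))); last first.
    by move=> b; rewrite Sjam.
  rewrite -cvec_eq -shat_nvec mulr_sumr; apply: eq_bigr => c _; ring.
have E3 : \sum_c Gtn gamma nu Ja U x d s c * phiK (U x) c =
   \sum_beta (sgn s * Ja x d beta) * (1/2 * speed2 (U x) * (rho (U x) * vel (U x) beta
      - nu x beta * rho (U x)) + pres gamma (U x) * vel (U x) beta).
  rewrite /Gtn.
  under eq_bigr do rewrite nhat_sum mulr_sumr mulr_suml.
  rewrite exchange_big /=; apply: eq_bigr => beta _.
  rewrite -(flux_phi gamma beta (nu x beta) px) mulr_sumr; apply: eq_bigr => c _; ring.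
rewrite E1 E2 E3 -sumrB -big_split /=; apply: eq_bigr => beta _.
rewrite shat_nvec cvec_eq /F1 Gcons // /fluxF eqxx /speed2 /avg /rho !sum3.
by field.
Qed.


Lemma static :
  ip w (volD xi Gsharp nu Ja U) (fun x => phiK (U x))
  + surf_int w (fun x d s => \sum_c phiK (U x) c *
        (Gstarn Gstar nu Ja U Uext x d s c - Gtn gamma nu Ja U x d s c))
  = 1/2 * \sum_iota ip3 w
          (fun x beta =>
             dxi xi (fun y => pres gamma (U y)) iota x * Ja x iota beta
             + pres gamma (U x) * dxi xi (fun y => Ja y iota beta) iota x
             + dxi xi (fun y => pres gamma (U y) * Ja y iota beta) iota x)
          (fun x beta => vel (U x) beta)
    + \sum_iota surf_int w (fun x d s =>
          shat Ja x d s * nvec Ja x d s iota *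
            (1/2 * ubar2 (U x) (Uext x d s)
                 * Gstar iota (nu x) (U x) (Uext x d s) ord0
             + (pstar (U x) (Uext x d s) - pres gamma (U x)) * vel (U x) iota)).
Proof.
rewrite stepB stepC stepD surf_int_sum.
rewrite [surf_int w _ + _]addrC -addrA surf_intD; congr (_ + _).
by apply: surf_int_ext => x d s f; exact: stepE f.
Qed.

End Static.

Theorem theorem3p1 (R : realType) (N : nat) (gamma : R) (xi w : 'I_N.+1 -> R)
  (Gsharp : 'I_3 -> vec3 R -> vec3 R -> state R -> state R -> state R)
  (Gstar : 'I_3 -> vec3 R -> state R -> state R -> state R)
  (pstar : state R -> state R -> R)
  (Jac : R -> node N -> R) (U : R -> node N -> state R)
  (Ja : R -> node N -> 'I_3 -> 'I_3 -> R) (nu : R -> node N -> vec3 R)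
  (Uext : R -> node N -> 'I_3 -> bool -> state R) :
  1 < gamma ->
  is_LGL xi w ->
  (* symmetry and consistency of the volume fluxes *)
  (forall iota nL nR UL UR, 0 < rho UL -> 0 < rho UR ->
     Gsharp iota nL nR UL UR = Gsharp iota nR nL UR UL) ->
  (forall iota nL nR V, 0 < rho V ->
     Gsharp iota nL nR V V = fun c => fluxF gamma iota V c - avg (nL iota) (nR iota) * V c) ->
  (* Jameson's condition for the volume fluxes *)
  (forall iota ups nL nR UL UR, 0 < rho UL -> 0 < rho UR ->
     Gsharp iota nL nR UL UR (cmom ups) =
       Gsharp iota nL nR UL UR ord0 * avg (vel UL ups) (vel UR ups)
       + avg (pres gamma UL) (pres gamma UR) * delta iota ups) ->
  (* consistent pressure trace and Jameson's condition for the surface fluxes *)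
  (forall V, 0 < rho V -> pstar V V = pres gamma V) ->
  (forall iota ups n Um Up, 0 < rho Um -> 0 < rho Up ->
     Gstar iota n Um Up (cmom ups) =
       Gstar iota n Um Up ord0 * avg (vel Up ups) (vel Um ups)
       + pstar Um Up * delta iota ups) ->
  (* surface mass flux consistent with rho (u_iota - nu_iota) *)
  (forall iota n V, 0 < rho V -> Gstar iota n V V ord0 = rho V * (vel V iota - n iota)) ->
  (* physical states and positive Jacobian *)
  (forall t x, 0 < rho (U t x)) ->
  (forall t x d s, face_node x d s -> 0 < rho (Uext t x d s)) ->
  (forall t x, 0 < Jac t x) ->
  (* time differentiability of the nodal values *)
  (forall x t, derivable (fun t' => Jac t' x) t 1) ->
  (forall x c t, derivable (fun t' => U t' x c) t 1) ->
  (* the split form ALE DGSEM (for all test functions, given by their nodal values) *)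
  (forall t (phi : node N -> state R),
     ip w (fun x c => derive1 (fun t' => Jac t' x * U t' x c) t) phi =
       - ip w (volD xi Gsharp (nu t) (Ja t) (U t)) phi
       - surf_int w (fun x d s =>
           \sum_c phi x c * (Gstarn Gstar (nu t) (Ja t) (U t) (Uext t) x d s c
                             - Gtn gamma (nu t) (Ja t) (U t) x d s c))) ->
  forall t,
    derive1 (fun t' => \sum_x wvol w x * kin (U t' x) * Jac t' x) t =
      - 1/2 * \sum_iota ip3 w
          (fun x beta =>
             dxi xi (fun y => pres gamma (U t y)) iota x * Ja t x iota beta
             + pres gamma (U t x) * dxi xi (fun y => Ja t y iota beta) iota x
             + dxi xi (fun y => pres gamma (U t y) * Ja t y iota beta) iota x)
          (fun x beta => vel (U t x) beta)
      - \sum_iota surf_int w (fun x d s =>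
          shat (Ja t) x d s * nvec (Ja t) x d s iota *
            (1/2 * ubar2 (U t x) (Uext t x d s)
                 * Gstar iota (nu t x) (U t x) (Uext t x d s) ord0
             + (pstar (U t x) (Uext t x d s) - pres gamma (U t x)) * vel (U t x) iota)).
Proof.
move=> _ H Gsym Gcons Gjam _ Sjam _ pos posext _ dJ dU scheme t.
have hx : forall x : node N, is_derive t 1 (fun s => wvol w x * kin (U s x) * Jac s x)
   (wvol w x * \sum_c derive1 (fun s => Jac s x * U s x c) t * phiK (U t x) c).
  move=> x.
  have hn := deriv_node (J := fun s => Jac s x) (V := fun s => U s x) (t := t)
     (fun s => pos s x) (dJ x t) (fun c => dU x c t).
  have hm := isD_mul (isD_cst t (wvol w x)) hn.
  have e : (fun s => wvol w x * kin (U s x) * Jac s x) =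
           (fun s => wvol w x * (kin (U s x) * Jac s x)).
    by apply/funext => s; rewrite mulrA.
  rewrite e; apply: is_derive_eq hm _; rewrite mulr0 addr0.
  by rewrite mulr_sumr; apply: eq_bigr => c _; rewrite mulrA.
have hs := isD_sum hx.
rewrite (isD_derive1 hs).
have St := @static R N gamma xi w Gsharp Gstar pstar (U t) (Ja t) (nu t) (Uext t) H Gsym Gcons Gjam Sjam (pos t) (posext t).
transitivity (ip w (fun x c => derive1 (fun t' => Jac t' x * U t' x c) t)
                  (fun x => phiK (U t x))).
  by rewrite /ip; apply: eq_bigr => x _; rewrite mulr_sumr.
rewrite scheme.
set A := ip _ _ _; set B := surf_int _ _; set S := \sum_iota _; set T := \sum_iota _.
have -> : - A - B = - (A + B) by ring.
rewrite St; transitivity (- (1/2 * S + T)); last by ring. by [].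
Qed.
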